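(* Let $G$ be a finite simple graph with maximum degree $\Delta$. If the induced subgraph $G[\mathrm{core}(G)]$ has a proper $\Delta$-edge coloring, then $G$ has a matching that saturates every vertex of $\mathrm{core}(G)$.
   Context: $\mathrm{core}(G)$ is the set of vertices of $G$ of degree $\Delta$. A proper $\Delta$-edge coloring assigns one of $\Delta$ colors to each edge so that adjacent edges get different colors. *)

(* Defs.v *)
From mathcomp Require Import all_boot.
Set Implicit Arguments. Unset Strict Implicit. Unset Printing Implicit Defensive.

Definition simple_graph (T : finType) (e : rel T) : Prop :=
  symmetric e /\ irreflexive e.

Definition nbhd (T : finType) (e : rel T) (x : T) : {set T} := [set y | e x y].
Definition deg (T : finType) (e : rel T) (x : T) : nat := #|nbhd e x|.

Definition max_deg (T : finType) (e : rel T) : nat := \max_(x : T) deg e x.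

Definition core (T : finType) (e : rel T) : {set T} :=
  [set x | deg e x == max_deg e].

Definition induced (T : finType) (e : rel T) (S : {set T}) : rel T :=
  fun x y => [&& x \in S, y \in S & e x y].

(* Values of c
   on non-edges are irrelevant. *)
Definition proper_edge_coloring (T : finType) (e : rel T) (k : nat)
    (c : T -> T -> 'I_k) : Prop :=
  (forall x y, e x y -> c x y = c y x) /\
  (forall x y z, e x y -> e x z -> y != z -> c x y != c x z).

Definition has_proper_edge_coloring (T : finType) (e : rel T) (k : nat) : Prop :=
  exists c : T -> T -> 'I_k, proper_edge_coloring e c.

Definition is_edge (T : finType) (e : rel T) (f : {set T}) : Prop :=
  exists x y, e x y /\ f = [set x; y].

Definition matching (T : finType) (e : rel T) (M : {set {set T}}) : Prop :=
  (forall f, f \in M -> is_edge e f) /\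
  (forall f g, f \in M -> g \in M -> f != g -> [disjoint f & g]).

Definition saturates (T : finType) (M : {set {set T}}) (S : {set T}) : Prop :=
  forall x, x \in S -> exists2 f, f \in M & x \in f.

(* Main.v *)
Require Import Defs.
From mathcomp Require Import all_boot.
From mathcomp Require Import zify.
From Stdlib Require Import Classical.
Set Implicit Arguments. Unset Strict Implicit. Unset Printing Implicit Defensive.

Section Pairing.
Variable V : finType.

Definition invol_on (A : {set V}) (f : V -> V) :=
  forall x, x \in A -> [/\ f x \in A, f x != x & f (f x) = x].

Lemma invol_even (A : {set V}) f : invol_on A f -> ~~ odd #|A|.
Proof.
have: forall n (A : {set V}), #|A| <= n -> invol_on A f -> ~~ odd #|A|.
  elim=> [|n IH] B.
    by rewrite leqn0 => /eqP ->.
  move=> Hn Hf.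
  have [B0|[x xB]] := set_0Vmem B; first by rewrite B0 cards0.
  have [fxB fxx ffx] := Hf x xB.
  set B' := B :\: [set x; f x].
  have sub : [set x; f x] \subset B.
    by apply/subsetP=> y; rewrite !inE => /orP[] /eqP ->.
  have cB : #|B| = #|B'| + 2.
    by rewrite /B' -(cardsID [set x; f x] B) (setIidPr sub) cards2 eq_sym fxx addnC.
  have HB' : invol_on B' f.
    move=> y; rewrite /B' !inE negb_or => /andP[/andP[yx yfx] yB].
    have [fyB fyy ffy] := Hf y yB.
    split=> //; rewrite fyB andbT; apply/norP; split.
      by apply/eqP=> E; move: yfx; rewrite -E ffy eqxx.
    by apply/eqP=> E; move: yx; rewrite -ffy E ffx eqxx.
  rewrite cB addn2 /= negbK; apply: IH => //.
  by move: Hn; rewrite cB addn2 ltnS => /ltnW.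
by move=> H Hf; apply: (H #|A|).
Qed.

Definition invol_onb (A : {set V}) (f : V -> V) :=
  [forall x in A, [&& f x \in A, f x != x & f (f x) == x]].

Lemma invol_onP A f : reflect (invol_on A f) (invol_onb A f).
Proof.
apply: (iffP forall_inP) => H x xA.
  by have /and3P[-> -> /eqP ->] := H x xA.
by have [-> -> ->] := H x xA; rewrite eqxx.
Qed.

Lemma pairing_exists (A : {set V}) : ~~ odd #|A| -> exists f : {ffun V -> V}, invol_on A f.
Proof.
have: forall n (A : {set V}), #|A| <= n -> ~~ odd #|A| -> exists f : {ffun V -> V}, invol_on A f.
  elim=> [|n IH] B.
    rewrite leqn0 => /eqP /cards0_eq -> _.
    by exists [ffun x => x] => x; rewrite inE.
  move=> Hn Hodd.
  have [B0|[x xB]] := set_0Vmem B.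
    by exists [ffun x => x] => z; rewrite B0 inE.
  have [y yB yx] : exists2 y, y \in B & y != x.
    case: (pickP [pred y in B | y != x]) => [y /andP[yB yx]|Hall]; first by exists y.
    have : B \subset [set x].
      by apply/subsetP => z zB; have := Hall z; rewrite /= zB inE /= => /negbFE.
    move/subset_leq_card; rewrite cards1 => le1.
    have : #|B| = 1 by apply/eqP; rewrite eqn_leq le1 card_gt0; apply/set0Pn; exists x.
    by move=> E; move: Hodd; rewrite E.
  set B' := B :\: [set x; y].
  have sub : [set x; y] \subset B.
    by apply/subsetP=> z; rewrite !inE => /orP[] /eqP ->.
  have cB : #|B| = #|B'| + 2.
    by rewrite /B' -(cardsID [set x; y] B) (setIidPr sub) cards2 eq_sym yx addnC.
  have [f' Hf'] : exists f : {ffun V -> V}, invol_on B' f.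
    apply: IH; first by move: Hn; rewrite cB addn2 ltnS => /ltnW.
    by move: Hodd; rewrite cB addn2 /= negbK.
  exists [ffun z => if z == x then y else if z == y then x else f' z] => z zB.
  rewrite !ffunE.
  case: (eqVneq z x) => [->|zx].
    by rewrite eqxx (negbTE yx).
  case: (eqVneq z y) => [->|zy].
    by rewrite eqxx xB eq_sym yx.
  have zB' : z \in B' by rewrite /B' !inE negb_or zx zy zB.
  have [fB' fz ffz] := Hf' z zB'.
  move: fB'; rewrite /B' !inE negb_or => /andP[/andP[fx fy] fB].
  by rewrite (negbTE fx) (negbTE fy) ffz fB fz.
by move=> H Hodd; apply: (H #|A|).
Qed.

Definition pairing (A : {set V}) (x : V) : V :=
  if [pick f : {ffun V -> V} | invol_onb A f] is Some f then f x else x.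

Lemma pairingP (A : {set V}) : ~~ odd #|A| -> invol_on A (pairing A).
Proof.
move=> Hodd; rewrite /pairing; case: pickP => [f /invol_onP Hf|H].
  exact: Hf.
have [f Hf] := pairing_exists Hodd.
by have := H f; rewrite (introT (invol_onP _ _) Hf).
Qed.

End Pairing.


Section Case2.
Variable V : finType.

Definition addE (e : rel V) (u v : V) : rel V :=
  fun x y => e x y || ((x == u) && (y == v)) || ((x == v) && (y == u)).

Definition pm (e : rel V) (p : V -> V) := forall x, p (p x) = x /\ e x (p x).

Lemma addE_e e u v x y : addE e u v x y -> x != u -> x != v -> e x y.
Proof.
by rewrite /addE => /orP[/orP[//|/andP[/eqP -> _]]|/andP[/eqP -> _]]; rewrite eqxx.
Qed.

Lemma pm_add_fix e u v p : irreflexive e -> u != v -> pm (addE e u v) p ->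
  forall z, p z != z.
Proof.
move=> irr uv H z; apply/eqP => E; have [_ ] := H z; rewrite E /addE irr /=.
case/orP => /andP[/eqP -> /eqP F]; by rewrite F eqxx in uv.
Qed.

Lemma pm_add_use e u v p : u != v -> (forall q, ~ pm e q) -> pm (addE e u v) p ->
  p u = v.
Proof.
move=> uv noPM H; apply/eqP/negPn/negP => puv.
apply: (noPM p) => x; have [ppx ex] := H x; split=> //.
case: (eqVneq x u) => [Exu|xu].
  by move: ex; rewrite Exu /addE (negbTE puv) eqxx (negbTE uv) /= !orbF.
case: (eqVneq x v) => [Exv|xv]; last exact: addE_e ex xu xv.
move: ex; rewrite Exv /addE eqxx /= (eq_sym v u) (negbTE uv) /= orbF.
case/orP => // /eqP F; move: puv; rewrite -F.
by have [-> _] := H v; rewrite eqxx.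
Qed.

Lemma arL1 i j : i < j -> i.*2 < j.*2. Proof. lia. Qed.
Lemma arL2 i j : i < j -> i.*2.+1 < j.*2. Proof. lia. Qed.
Lemma arL3 i j : i <= j -> i.*2 < j.*2.+1. Proof. lia. Qed.
Lemma arL4 i j : i <= j -> i != j -> i.*2.+1 < j.*2.+1. Proof. lia. Qed.

Variable e : rel V.
Hypothesis esym : symmetric e.
Hypothesis eirr : irreflexive e.

Lemma case2 (a b c d : V) (p1 p2 : V -> V) :
  (forall p, ~ pm e p) -> e a b -> e b c -> a != c -> b != d -> ~~ e b d ->
  pm (addE e a c) p1 -> pm (addE e b d) p2 -> False.
Proof.
move=> noPM eab ebc ac bd nbd H1 H2.
have p1a : p1 a = c := pm_add_use ac noPM H1.
have p2b : p2 b = d := pm_add_use bd noPM H2.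
have inv1 z : p1 (p1 z) = z by case: (H1 z).
have inv2 z : p2 (p2 z) = z by case: (H2 z).
have p1c : p1 c = a by rewrite -p1a inv1.
have p2d : p2 d = b by rewrite -p2b inv2.
have fp1 := pm_add_fix eirr ac H1.
have fp2 := pm_add_fix eirr bd H2.
pose q z := p2 (p1 z).
have qinj : injective q.
  by move=> z w /(congr1 p2); rewrite /q !inv2 => /(congr1 p1); rewrite !inv1.
have iqinj i : injective (iter i q).
  elim: i => [|i IH] z w //= /qinj; exact: IH.
pose x_ i := iter i q d.
pose y_ i := p1 (x_ i).
have Qid i z : iter i q (p1 (iter i q z)) = p1 z.
  elim: i z => [|i IH] z //.
  rewrite iterSr iterS.
  have -> : q (p1 (q (iter i q z))) = p1 (iter i q z).
    by rewrite /q inv1 inv2.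
  exact: IH.
have p1d k : p1 d != iter k q d.
  apply/eqP => E.
  have Hk := odd_double_half k.
  set l := k./2 in Hk; set z := iter l q d.
  have Hl := Qid l d; rewrite -/z E in Hl.
  move: Hl; rewrite -Hk iterD.
  case: (odd k) => /=.
    rewrite -addnn iterD -/z -iterS iterSr => /iqinj F.
    by move: (fp2 (p1 z)); rewrite /q in F; rewrite -F eqxx.
  rewrite -addnn iterD -/z => /iqinj F.
  by move: (fp1 z); rewrite F eqxx.
have yx i j : y_ i != x_ j.
  apply/eqP => E; have := Qid i d; rewrite -/(x_ i) -/(y_ i) E /x_ -iterD => F.
  by move: (p1d (i + j)); rewrite F eqxx.
have xS i : x_ i.+1 = p2 (y_ i) by rewrite /x_ iterS.
have p2y i : p2 (y_ i) = x_ i.+1 by rewrite xS.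
have p2x i : p2 (x_ i.+1) = y_ i by rewrite xS inv2.
have p1x i : p1 (x_ i) = y_ i by [].
have p1y i : p1 (y_ i) = x_ i by rewrite /y_ inv1.
have x0 : x_ 0 = d by [].
have [m ym] : exists m, y_ m = b.
  have := iter_order qinj d; have := order_gt0 q d.
  case: (order q d) => [//|m] _; rewrite iterS -/(x_ m) => E.
  by exists m; rewrite /y_ -(inv2 (p1 (x_ m))); rewrite /q in E; rewrite E p2d.
pose w n := if odd n then y_ n./2 else x_ n./2.
have w2 i : w i.*2 = x_ i by rewrite /w odd_double doubleK.
have w2S i : w i.*2.+1 = y_ i by rewrite /w /= odd_double /= uphalf_double.
pose hit n := [|| w n == a, w n == b | w n == c].
have exhit : exists n, hit n by exists m.*2.+1; rewrite /hit w2S ym eqxx orbT.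
case: (ex_minnP exhit) => n0 hn0 minn0.
have mini k : k < n0 -> ~~ hit k.
  by move=> kn; apply/negP => /minn0; rewrite leqNgt kn.
have ab : a != b by apply/eqP => E; move: eab; rewrite E eirr.
have bc : b != c by apply/eqP => E; move: ebc; rewrite E eirr.
have da : d != a by apply/eqP => E; move: nbd; rewrite E esym eab.
have dc : d != c by apply/eqP => E; move: nbd; rewrite E ebc.
have nhx i : i.*2 < n0 -> [/\ x_ i != a, x_ i != b & x_ i != c].
  by move=> /mini; rewrite /hit w2 !negb_or => /and3P[].
have nhy i : i.*2.+1 < n0 -> [/\ y_ i != a, y_ i != b & y_ i != c].
  by move=> /mini; rewrite /hit w2S !negb_or => /and3P[].
have n0E := odd_double_half n0.
have wn0 : w n0 = if odd n0 then y_ n0./2 else x_ n0./2 by [].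
move: n0E wn0; set j := n0./2; clearbody j => n0E wn0.
have gen a' : (a' == a) || (a' == c) -> e a' b -> w n0 = a' -> False.
  move=> ha' eab' hw.
  have hc' : (p1 a' == a) || (p1 a' == c).
    by case/orP: ha' => /eqP ->; rewrite ?p1a ?p1c eqxx ?orbT.
  have ev : ~~ odd n0.
    apply/negP => od; rewrite wn0 od in hw.
    have := nhx j; rewrite -p1y hw.
    have -> : j.*2 < n0 by rewrite -n0E od add1n ltnSn.
    case=> // H1' _ H3'; by move: hc'; rewrite (negbTE H1') (negbTE H3').
  have n0j : n0 = j.*2 by rewrite -n0E (negbTE ev).
  have xj : x_ j = a' by rewrite -hw wn0 (negbTE ev).
  have [j' jE] : exists j', j = j'.+1.
    case: (j) xj => [|j'] xj'; last by exists j'.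
    by move: ha'; rewrite -xj' x0 (negbTE da) (negbTE dc).
  pose Z := [set v | [exists i : 'I_j, (v == x_ i) || (v == y_ i)]].
  have inZ v : reflect (exists2 i, i < j & (v = x_ i \/ v = y_ i)) (v \in Z).
    rewrite inE; apply: (iffP existsP) => [[i /orP[] /eqP ->]|[i ij [] ->]].
    - by exists i => //; left.
    - by exists i => //; right.
    - by exists (Ordinal ij); rewrite eqxx.
    - by exists (Ordinal ij); rewrite eqxx orbT.
  have nhZ v : v \in Z -> [/\ v != a, v != b & v != c].
    case/inZ => i ij [] ->.
      by apply: nhx; rewrite n0j; apply: arL1.
    by apply: nhy; rewrite n0j; apply: arL2.
  have a'Z : a' \notin Z by apply/negP => /nhZ [H1' _ H3']; case/orP: ha' => /eqP E;
    [move: H1' | move: H3']; rewrite E eqxx.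
  have bZ : b \notin Z by apply/negP => /nhZ [_ /eqP].
  have dZ : d \in Z by apply/inZ; exists 0; [rewrite jE | left].
  have ba' : b != a' by apply/eqP => E; move: eab'; rewrite E eirr.
  have p1Z v : v \in Z -> p1 v \in Z.
    by case/inZ => i ij [] ->; apply/inZ; exists i => //; [right | left; rewrite p1y].
  have p2out v : v \notin Z -> v != a' -> v != b ->
      [/\ p2 v \notin Z, p2 v != a' & p2 v != b].
    move=> vZ va' vb; split.
    - apply/negP => /inZ [i ij [] E].
        case: i ij E => [|i] ij E.
          by move: vb; rewrite -(inv2 v) E x0 p2d eqxx.
        by move: vZ; rewrite -(inv2 v) E p2x; move/negP; apply; apply/inZ; exists i => //;
          [apply: ltnW | right].
      move: E => /(congr1 p2); rewrite inv2 p2y => E.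
      case: (ltnP i.+1 j) => ij'.
        by move/negP: vZ; apply; apply/inZ; exists i.+1 => //; left.
      have ej : i.+1 = j by apply/eqP; rewrite eqn_leq ij ij'.
      by move: va'; rewrite E ej xj eqxx.
    - apply/eqP => E; move/negP: vZ; apply; apply/inZ; exists j'; first by rewrite jE.
      by right; rewrite -(inv2 v) E -xj jE p2x.
    - by apply/eqP => E; move/negP: vZ; apply; rewrite -(inv2 v) E p2b.
  pose p v := if v \in Z then p1 v else if v == a' then b else if v == b then a' else p2 v.
  apply: (noPM p) => v.
  have [vZ|vZ] := boolP (v \in Z).
    have -> : p v = p1 v by rewrite /p vZ.
    have -> : p (p1 v) = p1 (p1 v) by rewrite /p p1Z.
    rewrite inv1; split=> //.
    have [H1' _ H3'] := nhZ v vZ.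
    by have [_ ] := H1 v; move/addE_e; apply.
  case: (eqVneq v a') => [->|va'].
    have -> : p a' = b by rewrite /p (negbTE a'Z) eqxx.
    by rewrite /p (negbTE bZ) (negbTE ba') eqxx.
  case: (eqVneq v b) => [->|vb].
    have -> : p b = a' by rewrite /p (negbTE bZ) (negbTE ba') eqxx.
    by rewrite /p (negbTE a'Z) eqxx; split=> //; rewrite esym.
  have [H1' H2' H3'] := p2out v vZ va' vb.
  have -> : p v = p2 v by rewrite /p (negbTE vZ) (negbTE va') (negbTE vb).
  rewrite /p (negbTE H1') (negbTE H2') (negbTE H3') inv2; split=> //.
  have [_ ] := H2 v; move/addE_e; apply=> //.
  by apply/eqP => E; move: vZ; rewrite E dZ.
case/or3P: hn0 => /eqP hw.
- by apply: (gen a) => //; rewrite eqxx.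
-
  have od : odd n0.
    apply/negPn/negP => ev; rewrite wn0 (negbTE ev) in hw.
    case: (j) hw => [|j'] hw'.
      by move: bd; rewrite -hw' x0 eqxx.
    by move: (yx j' 0); rewrite -p2x hw' p2b x0 eqxx.
  have n0j : n0 = j.*2.+1 by rewrite -n0E od.
  have yj : y_ j = b by rewrite -hw wn0 od.
  pose Z := [set v | [exists i : 'I_j.+1, (v == x_ i) || (v == y_ i)]].
  have inZ v : reflect (exists2 i, i <= j & (v = x_ i \/ v = y_ i)) (v \in Z).
    rewrite inE; apply: (iffP existsP) => [[i /orP[] /eqP ->]|[i ij [] ->]].
    - by exists i; [rewrite -ltnS | left].
    - by exists i; [rewrite -ltnS | right].
    - by exists (Ordinal (ij : i < j.+1)); rewrite eqxx.
    - by exists (Ordinal (ij : i < j.+1)); rewrite eqxx orbT.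
  have nhZ v : v \in Z -> v != a /\ v != c.
    case/inZ => i ij [] ->.
      by have [] := nhx i; [rewrite n0j; apply: arL3 | ].
    case: (eqVneq i j) => [->|ij'].
      by rewrite yj eq_sym ab bc.
    by have [] := nhy i; [rewrite n0j; apply: arL4 | ].
  have bZ : b \in Z by apply/inZ; exists j => //; right.
  have dZ : d \in Z by apply/inZ; exists 0 => //; left.
  have p1Z v : v \in Z -> p1 v \in Z.
    by case/inZ => i ij [] ->; apply/inZ; exists i => //; [right | left; rewrite p1y].
  have p2Z v : v \in Z -> p2 v \in Z.
    case/inZ => i ij [] ->.
      case: i ij => [|i] ij; first by rewrite x0 p2d.
      by rewrite p2x; apply/inZ; exists i; [apply: ltnW | right].
    case: (eqVneq i j) => [->|ij']; first by rewrite yj p2b.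
    by rewrite p2y; apply/inZ; exists i.+1; [rewrite ltn_neqAle ij' ij | left].
  pose p v := if v \in Z then p1 v else p2 v.
  apply: (noPM p) => v.
  have [vZ|vZ] := boolP (v \in Z).
    have -> : p v = p1 v by rewrite /p vZ.
    have -> : p (p1 v) = p1 (p1 v) by rewrite /p p1Z.
    rewrite inv1; split=> //.
    have [H1' H3'] := nhZ v vZ.
    by have [_ ] := H1 v; move/addE_e; apply.
  have p2vZ : p2 v \notin Z by apply/negP => /p2Z; rewrite inv2 (negbTE vZ).
  have -> : p v = p2 v by rewrite /p (negbTE vZ).
  rewrite /p (negbTE p2vZ) inv2; split=> //.
  have [_ ] := H2 v; move/addE_e; apply.
    by apply/eqP => E; move: vZ; rewrite E bZ.
  by apply/eqP => E; move: vZ; rewrite E dZ.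
- by apply: (gen c) => //; [rewrite eqxx orbT | rewrite esym].
Qed.
End Case2.


Lemma inj_exists (T1 T2 : finType) (y0 : T2) (A : {set T1}) (B : {set T2}) :
  #|A| <= #|B| -> exists f : T1 -> T2, {in A &, injective f} /\ {in A, forall x, f x \in B}.
Proof.
move=> AB.
have ltB x : x \in A -> index x (enum A) < size (enum B).
  by move=> xA; rewrite -cardE (leq_trans _ AB) // cardE index_mem mem_enum.
exists (fun x => nth y0 (enum B) (index x (enum A))); split.
  move=> x y xA yA /eqP; rewrite nth_uniq ?enum_uniq ?ltB // => /eqP E.
  by apply: (@index_inj _ x (enum A)); rewrite ?mem_enum.
by move=> x xA; rewrite -mem_enum mem_nth // ltB.
Qed.

Section Tutte.
Variable V : finType.

Lemma disjP (A B : {set V}) : reflect (forall x, x \in A -> x \in B -> False) [disjoint A & B].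
Proof.
rewrite disjoint_subset; apply: (iffP subsetP) => H x xA.
  by move=> xB; have := H x xA; rewrite inE xB.
by rewrite inE; apply/negP => /(H x xA).
Qed.

Definition closedX (e : rel V) (X C : {set V}) :=
  forall x y, x \in C -> e x y -> (y \in C) || (y \in X).

Definition tutte (e : rel V) := forall (X : {set V}) (P : {set {set V}}),
  (forall C, C \in P -> [/\ odd #|C|, [disjoint C & X] & closedX e X C]) ->
  (forall C D, C \in P -> D \in P -> C != D -> [disjoint C & D]) ->
  #|P| <= #|X|.

Lemma tutte_mono (e1 e2 : rel V) : (forall x y, e1 x y -> e2 x y) -> tutte e1 -> tutte e2.
Proof.
move=> s12 Ht X P HP HD; apply: (Ht X P) => // C CP; have [o d cl] := HP C CP; split=> //.
by move=> x y xC exy; exact: (cl x y xC (s12 _ _ exy)).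
Qed.

Definition univ (e : rel V) := [set u | [forall v, (v != u) ==> e u v]].

Lemma univP e u v : u \in univ e -> v != u -> e u v.
Proof. by rewrite inE => /forallP /(_ v) /implyP. Qed.

Lemma case1 (e : rel V) : symmetric e -> irreflexive e -> tutte e ->
  (forall a b c, b \notin univ e -> e a b -> e b c -> a != c -> e a c) ->
  exists p, pm e p.
Proof.
move=> esym eirr Ht H.
case: (pickP (@predT V)) => [v0 _|V0]; last by exists id => x; have := V0 x.
set U := univ e; set W := ~: U.
have Veven : ~~ odd #|[set: V]|.
  apply/negP => od.
  suff : #|[set [set: V]]| <= #|(set0 : {set V})| by rewrite cards1 cards0.
  apply: Ht.
    move=> C; rewrite inE => /eqP ->; split => //.
      by apply/disjP => x _; rewrite inE.
    by move=> x y _ _; rewrite inE.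
  by move=> C D; rewrite !inE => /eqP -> /eqP ->; rewrite eqxx.
pose R x y := (x == y) || e x y.
have Rsym x y : R x y = R y x by rewrite /R eq_sym esym.
have Rtr x y z : y \in W -> R x y -> R y z -> R x z.
  move=> yW; rewrite /R; case: (eqVneq x y) => [->//|xy] /= exy.
  case: (eqVneq y z) => [<-|yz] /= eyz; first by rewrite exy orbT.
  case: (eqVneq x z) => //= xz; apply: (H x y z) => //.
  by move: yW; rewrite inE.
pose cls x := [set y in W | R x y].
have clsE x y : (y \in cls x) = (y \in W) && R x y by rewrite /cls in_set.
have WE x : (x \in W) = (x \notin U) by rewrite /W inE.
clearbody W.
have clsW x y : y \in cls x -> y \in W by rewrite clsE => /andP[].
have cls_self x : x \in W -> x \in cls x by move=> xW; rewrite clsE xW /R eqxx.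
have cls_eq x y : x \in W -> y \in cls x -> cls y = cls x.
  move=> xW; rewrite clsE => /andP[yW xy]; apply/setP => z; rewrite !clsE.
  case zW: (z \in W) => //=; apply/idP/idP => Hz.
    exact: (Rtr x y z yW xy Hz).
  by apply: (Rtr y x z xW _ Hz); rewrite Rsym.
have cls_clique x y z : x \in W -> y \in cls x -> z \in cls x -> y != z -> e y z.
  move=> xW; rewrite !clsE => /andP[yW xy] /andP[zW xz] yz.
  have : R y z by apply: (Rtr y x z xW _ xz); rewrite Rsym.
  by rewrite /R (negbTE yz).
have cls_closed x : x \in W -> closedX e U (cls x).
  move=> xW y z yC eyz; case: (boolP (z \in U)) => zU; first by rewrite orbT.
  apply/orP; left; rewrite clsE WE zU /=; move: yC; rewrite clsE => /andP[yW xy].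
  by apply: (Rtr x y z yW xy); rewrite /R eyz orbT.
have cls_disj x y : x \in W -> y \in W -> cls x != cls y -> [disjoint cls x & cls y].
  move=> xW yW nxy; apply/disjP => z zx zy; move: nxy.
  by rewrite -(cls_eq x z xW zx) -(cls_eq y z yW zy) eqxx.
have clsU x : x \in W -> [disjoint cls x & U].
  by move=> xW; apply/disjP => z /clsW; rewrite WE => /negP.
pose O := [set C in [set cls x | x in W] | odd #|C|].
have OP C : reflect (exists2 x, x \in W & C = cls x /\ odd #|cls x|) (C \in O).
  rewrite inE; apply: (iffP andP) => [[/imsetP[x xW ->] od]|[x xW [-> od]]].
    by exists x.
  by rewrite imset_f.
have OU : #|O| <= #|U|.
  apply: Ht.
    move=> C /OP [x xW [-> od]]; split=> //; [exact: clsU | exact: cls_closed].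
  move=> C D /OP [x xW [-> _]] /OP [y yW [-> _]]; exact: cls_disj.
have [phi [phiI phiU]] := inj_exists v0 OU.
have phiW C : C \in O -> phi C \notin W by move=> CO; rewrite WE negbK phiU.
have phiC C : C \in O -> phi C \notin C.
  move=> CO; have [x xW [E _]] := OP _ CO; apply/negP; rewrite {2}E => /clsW.
  by apply/negP; exact: phiW.
pose bk (C : {set V}) := if odd #|C| then phi C |: C else C.
pose blk x := if x \in W then bk (cls x)
  else if [pick C in O | phi C == x] is Some C then bk C else set0.
pose Y := W :|: phi @: O.
have blkA z y : z \in W -> y \in bk (cls z) -> blk y = bk (cls z).
  move=> zW; rewrite {1}/bk; case: ifP => od.
    rewrite in_setU1 => /orP[/eqP ->|yC].
      have CO : cls z \in O by apply/OP; exists z.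
      rewrite /blk (negbTE (phiW _ CO)); case: pickP => [C' /andP[C'O /eqP E]|none].
        by rewrite (phiI _ _ C'O CO E).
      by have := none (cls z); rewrite CO eqxx.
    by rewrite /blk (clsW _ _ yC) (cls_eq z y zW yC).
  by move=> yC; rewrite /blk (clsW _ _ yC) (cls_eq z y zW yC).
have blkB x : x \in Y -> exists2 z, z \in W & (blk x = bk (cls z) /\ x \in bk (cls z)).
  rewrite in_setU => /orP[xW|/imsetP[C0 C0O ->]].
    exists x => //; split; first by rewrite /blk xW.
    by rewrite /bk; case: ifP; rewrite ?in_setU1 cls_self ?orbT.
  have [z zW [E od]] := OP _ C0O.
  have pb : phi C0 \in bk (cls z) by rewrite /bk od -E setU11.
  by exists z => //; split=> //; apply: blkA.
have bkC z : z \in W -> [/\ ~~ odd #|bk (cls z)|, bk (cls z) \subset Y &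
    (forall y t, y \in bk (cls z) -> t \in bk (cls z) -> y != t -> e y t)].
  move=> zW; rewrite /bk; case: ifP => od.
    have CO : cls z \in O by apply/OP; exists z.
    split.
    - by rewrite cardsU1 (phiC _ CO) add1n /= od.
    - apply/subsetP => y; rewrite in_setU1 => /orP[/eqP ->|/clsW yW]; rewrite in_setU ?yW //.
      by rewrite imset_f ?orbT.
    - move=> y t; rewrite !in_setU1 => /orP[/eqP ->|yC] /orP[/eqP ->|tC] yt.
      + by rewrite eqxx in yt.
      + by apply: univP; [apply: phiU | rewrite eq_sym].
      + by rewrite esym; apply: univP; [apply: phiU | ].
      + exact: cls_clique zW yC tC yt.
  split.
  - by rewrite od.
  - by apply/subsetP => y /clsW yW; rewrite in_setU yW.
  - move=> y t yC tC yt; exact: cls_clique zW yC tC yt.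
pose g x := pairing (blk x) x.
have gI : invol_on Y g.
  move=> x xY; have [z zW [bx xb]] := blkB x xY; have [ev sY cl] := bkC z zW.
  have [gb gx ggx] := pairingP ev xb.
  rewrite /g bx; split=> //; first exact: (subsetP sY).
  by rewrite (blkA z _ zW gb).
have Yev := invol_even gI.
have cYev : ~~ odd #|~: Y|.
  by move: Veven; rewrite cardsT -(cardsC Y) oddD (negbTE Yev).
have cYU x : x \in ~: Y -> x \in U.
  by rewrite inE in_setU negb_or => /andP[xW _]; rewrite WE negbK in xW.
pose h := pairing (~: Y).
have hI := pairingP cYev.
pose p x := if x \in Y then g x else h x.
exists p => x.
case: (boolP (x \in Y)) => xY.
  have [gY gx ggx] := gI x xY.
  rewrite /p xY gY ggx; split=> //.
  have [z zW [bx xb]] := blkB x xY; have [ev sY cl] := bkC z zW.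
  apply: (cl x (g x) xb); last by rewrite eq_sym.
  by rewrite /g bx; have [] := pairingP ev xb.
have xcY : x \in ~: Y by rewrite inE xY.
have [hY hx hhx] := hI x xcY.
have hY' : h x \notin Y by move: hY; rewrite inE.
have -> : p x = h x by rewrite /p (negbTE xY).
have -> : p (h x) = h (h x) by rewrite /p (negbTE hY').
rewrite {1}/h hhx; split=> //.
exact: univP (cYU x xcY) hx.
Qed.

Definition nne (e : rel V) := #|[set u : V * V | (u.1 != u.2) && ~~ e u.1 u.2]|.

Lemma addE_sym (e : rel V) u v : symmetric e -> symmetric (addE e u v).
Proof.
move=> esym x y; rewrite /addE esym -!orbA; congr (_ || _).
by rewrite orbC (andbC (x == v)) (andbC (x == u)).
Qed.

Lemma addE_irr (e : rel V) u v : irreflexive e -> u != v -> irreflexive (addE e u v).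
Proof.
move=> eirr uv x; rewrite /addE eirr /=.
by apply/negP => /orP[] /andP[/eqP -> /eqP E]; rewrite E eqxx in uv.
Qed.

Lemma nne_add (e : rel V) u v : u != v -> ~~ e u v -> nne (addE e u v) < nne e.
Proof.
move=> uv nuv; apply: proper_card; apply/properP; split.
  apply/subsetP => w; rewrite !inE => /andP[-> /=]; rewrite /addE.
  by rewrite !negb_or => /andP[/andP[-> _] _].
exists (u, v); first by rewrite inE /= uv nuv.
by rewrite inE /= uv /addE !eqxx /= orbT.
Qed.

Theorem tutte_thm (e : rel V) : symmetric e -> irreflexive e -> tutte e -> exists p, pm e p.
Proof.
suff: forall n e, nne e < n -> symmetric e -> irreflexive e -> tutte e -> exists p, pm e p.
  by move=> H; apply: (H (nne e).+1).
elim=> // n IH e' Hn esym eirr Ht.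
case: (classic (exists p, pm e' p)) => // noPM'.
have noPM : forall p, ~ pm e' p by move=> p Hp; apply: noPM'; exists p.
have maxi a c : a != c -> ~~ e' a c -> exists p, pm (addE e' a c) p.
  move=> ac nac; apply: IH.
  - exact: leq_trans (nne_add ac nac) Hn.
  - exact: addE_sym.
  - exact: addE_irr.
  - apply: tutte_mono Ht => x y exy; by rewrite /addE exy.
case: (classic (exists a b c, [/\ b \notin univ e', e' a b, e' b c, a != c & ~~ e' a c])).
  move=> [a [b [c [bU eab ebc ac nac]]]].
  move: (bU); rewrite inE => /forallPn [d]; rewrite negb_imply => /andP[db nbd].
  have bd : b != d by rewrite eq_sym.
  have [p1 H1] := maxi a c ac nac.
  have [p2 H2] := maxi b d bd nbd.
  by case: (case2 esym eirr noPM eab ebc ac bd nbd H1 H2).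
move=> Hno; apply: case1 => // a b c bU eab ebc ac.
by apply/negPn/negP => nac; apply: Hno; exists a, b, c; split.
Qed.

End Tutte.


Lemma arith_fin k D s1 s2 : s1 <= D * k -> k.+1 * D = s1 + s2 -> D <= s2.
Proof. rewrite mulSn mulnC; lia. Qed.

Lemma card_cond (T : finType) (A : {set T}) (P : pred T) :
  #|[set v in A | P v]| = \sum_(v in A) (P v : nat).
Proof.
rewrite -sum1_card big_mkcond [RHS]big_mkcond; apply: eq_bigr => v _.
by rewrite inE; case: (v \in A); case: (P v).
Qed.

Section Count.
Variable V : finType.

Lemma odd_sum_odd (P : {set {set V}}) :
  (forall C, C \in P -> odd #|C|) -> odd (\sum_(C in P) #|C|) = odd #|P|.
Proof.
move=> HP; rewrite -sum1_card.
rewrite (big_morph odd (id1 := false) (op1 := addb) oddD) //.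
rewrite [in RHS](big_morph odd (id1 := false) (op1 := addb) oddD) //.
by apply: eq_bigr => C /HP ->.
Qed.

Variable e : rel V.
Hypothesis esym : symmetric e.
Hypothesis eirr : irreflexive e.

Lemma odd_closed_bound (S X C : {set V}) (D : nat) (c : V -> V -> 'I_D) :
  (forall x y, x \in S -> y \in S -> e x y -> c x y = c y x) ->
  (forall x y z, x \in S -> y \in S -> z \in S -> e x y -> e x z -> y != z ->
     c x y != c x z) ->
  (forall u, u \in S -> #|[set v | e u v]| = D) ->
  C \subset S -> odd #|C| -> [disjoint C & X] -> closedX e X C ->
  D <= \sum_(u in C) #|[set v in X | e u v]|.
Proof.
move=> csym cprop deg CS oC dCX clC.
have CSx u : u \in C -> u \in S := subsetP CS u.
pose inC u := #|[set v in C | e u v]|.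
pose inX u := #|[set v in X | e u v]|.
have split_deg u : u \in C -> D = inC u + inX u.
  move=> uC; rewrite -(deg u (CSx u uC)) -(cardsID C [set v | e u v]).
  rewrite /inC /inX; congr (_ + _); apply: eq_card => v; rewrite !inE.
    by rewrite andbC.
  case: (boolP (v \in C)) => vC /=; first by rewrite (disjointFr dCX vC).
  apply/idP/idP => [euv|/andP[vX ->]] //.
  by have := clC u v uC euv; rewrite (negbTE vC) /= => ->.
pose A (al : 'I_D) := [set u in C | [exists v in C, e u v && (c u v == al)]].
have uniqc w x y : w \in C -> x \in C -> y \in C -> e w x -> e w y -> c w x = c w y -> x = y.
  move=> wC xC yC ewx ewy E; apply/eqP/negPn/negP => xy.
  by have := cprop w x y (CSx _ wC) (CSx _ xC) (CSx _ yC) ewx ewy xy; rewrite E eqxx.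
have Aeven al : ~~ odd #|A al|.
  pose f u := if [pick v in C | e u v && (c u v == al)] is Some v then v else u.
  have fback u v : u \in C -> v \in C -> e u v -> c u v = al -> f u = v.
    move=> uC vC euv cuv; rewrite /f; case: pickP => [w /andP[wC /andP[euw /eqP cuw]]|none].
      by apply: (uniqc u) => //; rewrite cuw.
    by have := none v; rewrite vC euv cuv eqxx.
  apply: (@invol_even _ _ f) => u; rewrite inE => /andP[uC /existsP [v /andP[vC /andP[euv /eqP cuv]]]].
  have fu : f u = v by apply: fback.
  have evu : e v u by rewrite esym.
  have cvu : c v u = al by rewrite -(csym u v (CSx _ uC) (CSx _ vC) euv).
  rewrite fu; split.
  - by rewrite inE vC; apply/existsP; exists u; rewrite uC evu cvu eqxx.
  - by apply/eqP => E; move: euv; rewrite E eirr.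
  - exact: fback.
have inC_sum u : u \in C -> inC u = \sum_(al < D) (u \in A al).
  move=> uC; rewrite /inC.
  have inj : {in [set v in C | e u v] &, injective (c u)}.
    move=> x y; rewrite !inE => /andP[xC eux] /andP[yC euy]; exact: uniqc.
  rewrite -(card_in_imset inj) -sum1_card.
  have -> : c u @: [set v in C | e u v] = [set al | u \in A al].
    apply/setP => al; rewrite inE /A inE uC /=; apply/imsetP/existsP.
      by move=> [v]; rewrite inE => /andP[vC euv] ->; exists v; rewrite vC euv eqxx.
    by move=> [v /andP[vC /andP[euv /eqP <-]]]; exists v => //; rewrite inE vC euv.
  rewrite big_mkcond /=; apply: eq_bigr => al _; rewrite inE.
  by case: (u \in A al).
have sumC : \sum_(u in C) inC u <= D * #|C|.-1.
  rewrite (eq_bigr _ inC_sum) exchange_big /=.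
  rewrite -[D in D * _]card_ord -sum_nat_const; apply: leq_sum => al _.
  have AC : A al \subset C by apply/subsetP => u; rewrite inE => /andP[].
  have -> : \sum_(u in C) (u \in A al : nat) = #|A al|.
    rewrite -card_cond; apply: eq_card => u; rewrite inE.
    by apply/andP/idP => [[]//|uA]; split=> //; exact: (subsetP AC).
  rewrite -ltnS prednK ?card_gt0; last by apply/set0Pn; apply/card_gt0P; case: #|C| oC.
  rewrite ltn_neqAle subset_leq_card // andbT.
  by apply/eqP => E; move: (Aeven al); rewrite E oC.
apply: (arith_fin (s1 := \sum_(u in C) inC u)).
  exact: sumC.
rewrite prednK; last by case: #|C| oC.
rewrite -sum_nat_const -big_split /=; apply: eq_bigr => u uC; exact: split_deg.
Qed.
End Count.


Lemma arith2 a b x : a <= x -> b <= 1 -> x < a + b -> a = x /\ b = 1.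
Proof. lia. Qed.

Section Reduce.
Variable V : finType.
Variable e : rel V.
Hypothesis esym : symmetric e.
Hypothesis eirr : irreflexive e.

Lemma family_bound (S X : {set V}) (D : nat) (Q : {set {set V}}) : 0 < D ->
  (forall x, #|[set y in S | e x y]| <= D) ->
  (forall C, C \in Q -> C \subset S /\ D <= \sum_(u in C) #|[set v in X | e u v]|) ->
  (forall C C', C \in Q -> C' \in Q -> C != C' -> [disjoint C & C']) ->
  #|Q| <= #|X|.
Proof.
move=> D0 degS HQ HD; rewrite -(leq_pmul2l D0) mulnC -sum_nat_const.
have tQ : trivIset Q by apply/trivIsetP => A B AQ BQ; apply: HD.
apply: (@leq_trans (\sum_(C in Q) \sum_(u in C) #|[set v in X | e u v]|)).
  by apply: leq_sum => C /HQ [].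
rewrite -big_trivIset //.
under eq_bigr => u _ do rewrite card_cond.
rewrite exchange_big /= mulnC -sum_nat_const; apply: leq_sum => x xX.
rewrite -card_cond; apply: leq_trans (degS x); apply: subset_leq_card.
apply/subsetP => u; rewrite !inE => /andP[/bigcupP [C CQ uC] eux].
have [CS _] := HQ C CQ.
by rewrite (subsetP CS u uC) esym eux.
Qed.

Lemma tutte_reduce (S : {set V}) (D : nat) : 0 < D ->
  ~~ odd #|V| ->
  (forall x y, x \notin S -> y \notin S -> x != y -> e x y) ->
  (forall x, #|[set y in S | e x y]| <= D) ->
  (forall X C : {set V}, C \subset S -> odd #|C| -> [disjoint C & X] -> closedX e X C ->
     D <= \sum_(u in C) #|[set v in X | e u v]|) ->
  tutte e.
Proof.
move=> D0 Vev clique degS Hb X P HP HD.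
pose P0 := P :&: [set C : {set V} | C \subset S].
pose P1 := P :\: [set C : {set V} | C \subset S].
have fam (Q : {set {set V}}) : (forall C, C \in Q -> [/\ C \subset S, odd #|C|,
     [disjoint C & X] & closedX e X C]) ->
  (forall C C', C \in Q -> C' \in Q -> C != C' -> [disjoint C & C']) -> #|Q| <= #|X|.
  move=> HQ HDQ; apply: (family_bound (S := S) D0 degS) => // C CQ.
  by have [CS oC dC cC] := HQ C CQ; split=> //; apply: Hb.
have h0 : #|P0| <= #|X|.
  apply: fam => [C|C C']; rewrite !inE.
    by move=> /andP[CP CS]; have [] := HP C CP; split.
  by move=> /andP[CP _] /andP[C'P _]; apply: HD.
have nS C : C \in P1 -> exists2 k, k \in C & k \notin S.
  by rewrite !inE => /andP[/subsetPn [k kC kS] _]; exists k.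
have h1 : #|P1| <= 1.
  apply/card_le1_eqP => C C' CP1 C'P1; apply/eqP/negPn/negP => CC'.
  have [k kC kS] := nS C CP1; have [k' kC' kS'] := nS C' C'P1.
  have CP : C \in P by move: CP1; rewrite inE => /andP[].
  have C'P : C' \in P by move: C'P1; rewrite inE => /andP[].
  have dCC' : [disjoint C & C'] by apply: HD => //; rewrite eq_sym.
  have kk' : k != k' by apply/eqP => E; move: (disjointFr dCC' kC); rewrite E kC'.
  have [_ _ clC] := HP C CP; have [_ dC'X _] := HP C' C'P.
  case/orP: (clC k k' kC (clique k k' kS kS' kk')) => H.
    by move: (disjointFr dCC' H); rewrite kC'.
  by move: (disjointFr dC'X kC'); rewrite H.
have cP : #|P| = #|P0| + #|P1| by rewrite cardsID.
rewrite leqNgt; apply/negP => ltXP.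
have lt' : #|X| < #|P0| + #|P1| by rewrite -cP.
have [e0 e1] := arith2 h0 h1 lt'.
have [Cs CsP1] : exists Cs, Cs \in P1 by apply/card_gt0P; rewrite e1.
have CsP : Cs \in P by move: CsP1; rewrite inE => /andP[].
have [k kCs kS] := nS Cs CsP1.
have [_ dCsX clCs] := HP Cs CsP.
pose Rr := ~: (X :|: cover P).
have inRr u : (u \in Rr) = (u \notin X) && (u \notin cover P) by rewrite !inE negb_or.
have tP : trivIset P by apply/trivIsetP => A B AP BP; apply: HD.
have coverP u : reflect (exists2 C, C \in P & u \in C) (u \in cover P).
  by rewrite /cover; apply: (iffP bigcupP).
have dXc : [disjoint X & cover P].
  apply/disjP => u uX /coverP[C CP uC]; have [_ dCX _] := HP C CP.
  by move: (disjointFr dCX uC); rewrite uX.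
have oRr : odd #|Rr|.
  have cV : #|X :|: cover P| + #|Rr| = #|V| by rewrite cardsC.
  have cU : #|X :|: cover P| = #|X| + #|cover P|.
    by rewrite cardsU (disjoint_setI0 dXc) cards0 subn0.
  have cc : #|cover P| = \sum_(C in P) #|C| by apply/eqP; rewrite eq_sym; exact: tP.
  have ocP : odd #|cover P| = odd #|P| by rewrite cc odd_sum_odd // => C /HP [].
  move: Vev; rewrite -cV cU !oddD ocP cP e0 e1 addn1 /=.
  by case: (odd #|X|); case: (odd #|Rr|).
have RrX : [disjoint Rr & X] by apply/disjP => u; rewrite inRr => /andP[/negP].
have RrC u C : u \in Rr -> C \in P -> u \notin C.
  move=> uR CP; apply/negP => uC; move: uR; rewrite inRr => /andP[_ /negP]; apply.
  by apply/coverP; exists C.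
have RrS : Rr \subset S.
  apply/subsetP => u uR; apply/negPn/negP => uS.
  have uk : k != u by apply/eqP => E; move: (RrC u Cs uR CsP); rewrite -E kCs.
  case/orP: (clCs k u kCs (clique k u kS uS uk)) => H.
    by move: (RrC u Cs uR CsP); rewrite H.
  by move: uR; rewrite inRr H.
have RrCl : closedX e X Rr.
  move=> u v uR euv; case: (boolP (v \in X)) => vX; first by rewrite orbT.
  rewrite inRr (negbTE vX) /= orbF; apply/negP => /coverP[C CP vC].
  have [_ _ clC] := HP C CP.
  have evu : e v u by rewrite esym.
  case/orP: (clC v u vC evu) => H.
    by move: (RrC u C uR CP); rewrite H.
  by move: uR; rewrite inRr H.
have RrP0 : Rr \notin P0.
  apply/negP; rewrite inE => /andP[RP _].
  have [u uR] : exists u, u \in Rr by apply/card_gt0P; case: #|Rr| oRr.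
  by move: (RrC u Rr uR RP); rewrite uR.
have : #|Rr |: P0| <= #|X|.
  apply: fam.
    move=> C; rewrite in_setU1 => /orP[/eqP ->|]; first by split.
    by rewrite !inE => /andP[CP CS]; have [] := HP C CP; split.
  move=> C C'; rewrite !in_setU1 => /orP[/eqP ->|C0] /orP[/eqP ->|C'0] CC'.
  - by rewrite eqxx in CC'.
  - move: C'0; rewrite inE => /andP[C'P _].
    by apply/disjP => u uR uC'; move: (RrC u C' uR C'P); rewrite uC'.
  - move: C0; rewrite inE => /andP[CP _].
    by apply/disjP => u uC uR; move: (RrC u C uR CP); rewrite uC.
  - move: C0 C'0; rewrite !inE => /andP[CP _] /andP[C'P _]; exact: HD.
by rewrite cardsU1 RrP0 e0 add1n ltnn.
Qed.
End Reduce.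


Section Dup.
Variable T : finType.
Definition tv (v : T + T) : T := match v with inl x => x | inr x => x end.
Definition side (v : T + T) : bool := if v is inl _ then true else false.
Definition mk (b : bool) (x : T) : T + T := if b then inl x else inr x.
Lemma tv_mk b x : tv (mk b x) = x. Proof. by case: b. Qed.
Lemma side_mk b x : side (mk b x) = b. Proof. by case: b. Qed.
Lemma mk_inj b : injective (mk b). Proof. by case: b => x y /= [] . Qed.
Lemma mk_tv v : mk (side v) (tv v) = v. Proof. by case: v. Qed.
End Dup.

Unset Implicit Arguments.

Theorem theorem5p2 (T : finType) (e : rel T) :
  simple_graph e -> 0 < max_deg e ->
  has_proper_edge_coloring (induced e (core e)) (max_deg e) ->
  exists M : {set {set T}}, matching e M /\ saturates M (core e).
Proof.
move=> [esym eirr] D0 [c [csym cprop]].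
have degD x : deg e x <= max_deg e.
  by rewrite /max_deg; apply: leq_bigmax.
have coreE x : (x \in core e) = (deg e x == max_deg e) by rewrite /core inE.
move: D0 c csym cprop degD coreE; set D := max_deg e; set K := core e.
move=> D0 c csym cprop degD coreE.
clearbody K D.
pose S := [set v : T + T | tv v \in K].
pose e2 : rel (T + T) := fun u v =>
  ((side u == side v) && e (tv u) (tv v)) || [&& tv u \notin K, tv v \notin K & u != v].
pose c2 u v := c (tv u) (tv v).
have e2sym : symmetric e2.
  move=> u v; rewrite /e2 esym eq_sym (eq_sym u v).
  by case: (tv u \in K); case: (tv v \in K).
have e2irr : irreflexive e2 by move=> u; rewrite /e2 eirr !eqxx /= !andbF.
have S_e2 u v : u \in S -> e2 u v = (side u == side v) && e (tv u) (tv v).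
  by rewrite inE => uS; rewrite /e2 uS /= orbF.
have S_e2' u v : v \in S -> e2 u v = (side u == side v) && e (tv u) (tv v).
  by rewrite inE => vS; rewrite /e2 vS /= andbF orbF.
have nb u : [set v | (side u == side v) && e (tv u) (tv v)] = mk (side u) @: nbhd e (tv u).
  apply/setP => v; rewrite inE; apply/andP/imsetP.
    by move=> [/eqP -> euv]; exists (tv v); [rewrite inE | rewrite mk_tv].
  by move=> [y]; rewrite inE => ey ->; rewrite side_mk tv_mk eqxx.
have ind x y : x \in S -> y \in S -> e2 x y -> induced e K (tv x) (tv y).
  move=> xS yS; rewrite S_e2 // => /andP[_ exy].
  by move: xS yS; rewrite !inE /induced => -> ->.
have Ht : tutte e2.
  apply: (tutte_reduce e2sym (S := S) D0).
  - by rewrite card_sum addnn odd_double.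
  - by move=> x y; rewrite !inE => xS yS xy; rewrite /e2 xS yS xy orbT.
  - move=> x; apply: leq_trans (degD (tv x)); rewrite /deg -(card_imset (nbhd e (tv x)) (@mk_inj _ (side x))).
    rewrite -nb; apply: subset_leq_card; apply/subsetP => y; rewrite !inE => /andP[yS].
    by rewrite S_e2' // inE.
  - move=> X C CS oC dCX clC.
    apply: (@odd_closed_bound _ e2 e2sym e2irr S X C D c2) => //.
    + by move=> x y xS yS exy; apply: csym; apply: ind.
    + move=> x y z xS yS zS exy exz yz; rewrite /c2; apply: cprop; try exact: ind.
      apply/eqP => E; move/eqP: yz; apply.
      move: exy exz; rewrite !S_e2 // => /andP[/eqP sxy _] /andP[/eqP sxz _].
      by rewrite -(mk_tv y) -(mk_tv z) -sxy -sxz E.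
    + move=> u uS; have := uS; rewrite inE coreE => /eqP <-.
      rewrite /deg -(card_imset (nbhd e (tv u)) (@mk_inj _ (side u))) -nb.
      by apply: eq_card => v; rewrite !inE S_e2.
have [p Hp] := tutte_thm e2sym e2irr Ht.
pose q x := tv (p (inl x)).
have pq x : x \in K -> p (inl x) = inl (q x) /\ e x (q x).
  move=> xK; have [_ ] := Hp (inl x); rewrite S_e2 ?inE //= => /andP[/eqP sp ex].
  by split=> //; rewrite /q -[LHS]mk_tv -sp.
have pinv v : p (p v) = v by case: (Hp v).
pose M := [set [set x; q x] | x in K].
exists M; split; last first.
  by move=> x xK; exists [set x; q x]; [apply: imset_f | rewrite setU11].
split.
  move=> f /imsetP [x xK ->]; exists x, (q x); split=> //; by have [] := pq x xK.
move=> f g /imsetP [x xK ->] /imsetP [y yK ->] fg.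
apply/disjP => z; rewrite !inE => zx zy; move/negP: fg; apply.
have [px _] := pq x xK; have [py _] := pq y yK.
have qx : p (inl (q x)) = inl x by rewrite -px pinv.
have qy : p (inl (q y)) = inl y by rewrite -py pinv.
have key : x = y \/ (q x = y /\ q y = x).
  case/orP: zx => /eqP zx; case/orP: zy => /eqP zy.
  - by left; rewrite -zx -zy.
  - right; have xqy : x = q y by rewrite -zx -zy.
    by split=> //; move: qy; rewrite -xqy px => [[]].
  - right; have qxy : q x = y by rewrite -zx -zy.
    by split=> //; move: qx; rewrite qxy py => [[]].
  - left; have qxy : q x = q y by rewrite -zx -zy.
    by move: (pinv (inl x)) (pinv (inl y)); rewrite px py qxy => -> [].
case: key => [->|[-> ->]] //.
by rewrite setUC.
Qed.
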